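(* For every integer $n\ge 1$, $\mathrm{TC}(\mathbb{S}^n)=4$, where $\mathbb{S}^n$ is the minimal finite model of the $n$-sphere.
   Context: Finite $T_0$ spaces are identified with finite posets (open sets are the down-closed sets). The non-Hausdorff join $A\circledast B$ is $A\sqcup B$ with the orders of $A$ and $B$ kept and $a\le b$ for all $a\in A,b\in B$. $\mathbb{S}^0$ is the two-point discrete space and inductively $\mathbb{S}^n=\mathbb{S}^{n-1}\circledast\mathbb{S}^0$ (a space with $2n+2$ points). Topological complexity is unreduced: $\mathrm{TC}(X)$ is the minimal $k$ such that $X\times X$ is covered by $k$ open sets each admitting a continuous section of $\pi:X^I\to X\times X$, $\gamma\mapsto(\gamma(0),\gamma(1))$. *)

(* Defs.v *)
From Stdlib Require Import Reals Rtopology.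
Open Scope R_scope.

(* A finite T0 space, presented as its specialization order. *)
Record poset : Type := Poset { carrier :> Type; le : carrier -> carrier -> Prop }.

Definition is_open (X : poset) (W : X -> Prop) : Prop :=
  forall x y : X, le X y x -> W x -> W y.

Definition nh_join (A B : poset) : poset :=
  Poset (A + B)%type (fun u v => match u, v with
    | inl a, inl a' => le A a a'
    | inr b, inr b' => le B b b'
    | inl _, inr _ => True
    | inr _, inl _ => False end).

Definition S0 : poset := Poset bool (fun a b => a = b).

Fixpoint sphere (n : nat) : poset :=
  match n with O => S0 | S m => nh_join (sphere m) S0 end.

Definition prod_open (X : poset) (O : X * X -> Prop) : Prop :=
  forall a b : X, O (a, b) -> exists A B : X -> Prop,
    is_open X A /\ is_open X B /\ A a /\ B b /\
    forall x y, A x -> B y -> O (x, y).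

Definition sub_open (X : poset) (U S : X * X -> Prop) : Prop :=
  exists O, prod_open X O /\ forall p, U p -> (S p <-> O p).

(* continuity of a path gamma : [0,1] -> X (values outside [0,1] ignored) *)
Definition path_continuous (X : poset) (g : R -> X) : Prop :=
  forall W : X -> Prop, is_open X W ->
  forall t, 0 <= t <= 1 -> W (g t) ->
  exists eps, 0 < eps /\
    forall s, 0 <= s <= 1 -> Rabs (s - t) < eps -> W (g s).

(* U admits a continuous section of pi : X^I -> X × X, X^I with the
   compact-open topology; continuity of s : U -> X^I is tested on the
   subbasic opens {gamma | gamma(K) ⊆ W}, K ⊆ [0,1] compact, W open. *)
Definition has_section (X : poset) (U : X * X -> Prop) : Prop :=
  exists s : X * X -> R -> X,
    (forall p, U p -> path_continuous X (s p) /\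
                      s p 0 = fst p /\ s p 1 = snd p) /\
    (forall (K : R -> Prop) (W : X -> Prop),
        compact K -> (forall t, K t -> 0 <= t <= 1) -> is_open X W ->
        sub_open X U (fun p => forall t, K t -> W (s p t))).

Definition motion_cover (X : poset) (k : nat) : Prop :=
  exists U : nat -> X * X -> Prop,
    (forall i, (i < k)%nat -> prod_open X (U i) /\ has_section X (U i)) /\
    (forall p, exists i, (i < k)%nat /\ U i p).

(* unreduced topological complexity TC(X) = k *)
Definition TC_eq (X : poset) (k : nat) : Prop :=
  motion_cover X k /\ forall m, motion_cover X m -> (k <= m)%nat.

(* Main.v *)
Require Import Defs.
From Stdlib Require Import Reals Rtopology Lia Lra List Classical.
Open Scope R_scope.

Lemma sph_refl : forall n (x : sphere n), Defs.le (sphere n) x x.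
Proof. induction n; intros x; simpl in *. reflexivity. destruct x as [a|b]; simpl; [apply IHn|reflexivity]. Qed.

Lemma sph_trans : forall n (x y z : sphere n),
  Defs.le _ x y -> Defs.le _ y z -> Defs.le _ x z.
Proof.
  induction n; intros x y z; simpl in *. congruence.
  destruct x, y, z; simpl; try tauto; eauto; congruence.
Qed.

Lemma no_max : forall n (m : sphere n), ~ (forall a : sphere n, Defs.le _ a m).
Proof.
  destruct n; simpl; intros m H.
  - pose proof (H true); pose proof (H false); congruence.
  - destruct m as [a|b].
    + exact (H (inr true)).
    + specialize (H (inr (negb b))); simpl in H; destruct b; discriminate.
Qed.

Definition unl {A B : Type} (d : A) (v : A + B) : A := match v with inl a => a | inr _ => d end.

Lemma unl_le : forall n (a : sphere n) (v : sphere (S n)), Defs.le (sphere (S n)) v (inl a) -> v = inl (unl a v).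
Proof. intros n a v H; destruct v; simpl in *; [reflexivity|contradiction]. Qed.

Lemma unl_eq : forall n (a : sphere n) (v : sphere (S n)), (forall b, v <> inr b) -> v = inl (unl a v).
Proof. intros n a v H; destruct v as [c|c]; simpl in *; [reflexivity|]. destruct (H c eq_refl). Qed.

Lemma rig_le : forall n (f : sphere n -> sphere n),
  (forall x y, Defs.le _ x y -> Defs.le _ (f x) (f y)) ->
  (forall x, Defs.le _ (f x) x) -> forall x, f x = x.
Proof.
  induction n; intros f Hm Hle x.
  - exact (Hle x).
  - set (g := fun a : sphere n => unl a (f (@inl (sphere n) bool a))).
    assert (Hg : forall a, f (@inl (sphere n) bool a) = inl (g a)).
    { intro a. unfold g. apply unl_le. apply Hle. }
    assert (Hgid : forall a, g a = a).
    { apply IHn.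
      - intros a a' H. assert (H1 := Hm (inl a) (inl a') H). rewrite !Hg in H1. exact H1.
      - intros a. assert (H1 := Hle (inl a)). rewrite Hg in H1. exact H1. }
    destruct x as [a|b].
    + rewrite Hg, Hgid. reflexivity.
    + assert (H1 := Hle (inr b)). destruct (f (inr b)) as [s|s] eqn:E.
      * exfalso. apply (no_max n s). intro a. assert (H2 := Hm (inl a) (inr b) I).
        rewrite E, Hg, Hgid in H2. exact H2.
      * simpl in H1. subst. exact E.
Qed.

Lemma rig_ge : forall n (f : sphere n -> sphere n),
  (forall x y, Defs.le _ x y -> Defs.le _ (f x) (f y)) ->
  (forall x, Defs.le _ x (f x)) -> forall x, f x = x.
Proof.
  induction n; intros f Hm Hge x.
  - symmetry; exact (Hge x).
  - assert (Hr : forall b, f (@inr (sphere n) bool b) = inr b).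
    { intro b. generalize (Hge (inr b)). destruct (f (inr b)) eqn:E; simpl; [tauto| intros; subst; exact E]. }
    set (g := fun a : sphere n => unl a (f (@inl (sphere n) bool a))).
    assert (Hg : forall a, f (@inl (sphere n) bool a) = inl (g a)).
    { intro a. unfold g. apply unl_eq. intros b E.
      assert (H2 := Hm (@inl (sphere n) bool a) (@inr (sphere n) bool (negb b)) I). rewrite E, Hr in H2. simpl in H2.
      destruct b; discriminate. }
    assert (Hgid : forall a, g a = a).
    { apply IHn.
      - intros a a' H. assert (H1 := Hm (inl a) (inl a') H). rewrite !Hg in H1. exact H1.
      - intros a. assert (H1 := Hge (inl a)). rewrite Hg in H1. exact H1. }
    destruct x as [a|b].
    + rewrite Hg, Hgid. reflexivity.
    + apply Hr.
Qed.

Lemma conn0 (Q : R -> Prop) :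
  (forall t, 0<=t<=1 -> exists eps, 0<eps /\ forall s, 0<=s<=1 -> Rabs (s-t) < eps -> (Q s <-> Q t)) ->
  Q 0 -> forall t, 0<=t<=1 -> Q t.
Proof.
  intros Hloc H0.
  set (E := fun x => 0<=x<=1 /\ forall s, 0<=s<=x -> Q s).
  assert (HE0 : E 0). { split; [lra|]. intros s Hs. replace s with 0 by lra. exact H0. }
  assert (Hb : bound E). { exists 1. intros x [Hx _]. lra. }
  destruct (completeness E Hb (ex_intro _ 0 HE0)) as [tau [Hub Hlub]].
  assert (Ht0 : 0 <= tau) by (apply Hub; exact HE0).
  assert (Ht1 : tau <= 1). { apply Hlub. intros x [Hx _]. lra. }
  destruct (Hloc tau (conj Ht0 Ht1)) as [eps [Heps Hl]].
  assert (Hx : exists x, E x /\ tau - eps < x).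
  { apply NNPP. intro Hn. assert (tau <= tau - eps). { apply Hlub. intros x Ex. apply Rnot_lt_le. intro Hlt. apply Hn. exists x; auto. } lra. }
  destruct Hx as [x [[Hx01 HxQ] Hxlt]].
  assert (Hxt : x <= tau) by (apply Hub; split; auto).
  assert (Qtau : Q tau). { apply (Hl x); [lra| apply Rabs_def1; lra | apply HxQ; lra]. }
  set (z := Rmin (tau + eps/2) 1).
  assert (Hzp : (z = tau + eps/2 /\ tau+eps/2 <= 1) \/ (z = 1 /\ 1 < tau+eps/2)).
  { unfold z, Rmin; destruct Rle_dec as [h|h]; [left|right; apply Rnot_le_lt in h]; split; auto. }
  assert (Hz : E z).
  { split; [destruct Hzp as [[-> ?]|[-> ?]]; lra|].
    intros s Hs. destruct (Rle_dec s x) as [h|h].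
    - apply HxQ; lra.
    - apply Rnot_le_lt in h. apply (Hl s); [destruct Hzp as [[-> ?]|[-> ?]]; lra | |exact Qtau].
      apply Rabs_def1; destruct Hzp as [[-> ?]|[-> ?]]; lra. }
  assert (z <= tau) by (apply Hub; exact Hz).
  destruct Hzp as [[Ez ?]|[Ez ?]]; [lra|].
  rewrite Ez in Hz. intros t Ht. apply (proj2 Hz). lra.
Qed.

Lemma conn (Q : R -> Prop) :
  (forall t, 0<=t<=1 -> exists eps, 0<eps /\ forall s, 0<=s<=1 -> Rabs (s-t) < eps -> (Q s <-> Q t)) ->
  forall t, 0<=t<=1 -> (Q t <-> Q 0).
Proof.
  intros Hloc. apply (conn0 (fun t => Q t <-> Q 0)).
  - intros t Ht. destruct (Hloc t Ht) as [eps [He Hl]]. exists eps; split; auto.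
    intros s Hs Hst. specialize (Hl s Hs Hst). tauto.
  - tauto.
Qed.

Lemma unif (A : Type) (P : A -> R -> Prop) :
  (forall a e e', 0 < e' <= e -> P a e -> P a e') ->
  forall l : list A, (forall a, In a l -> exists e, 0 < e /\ P a e) ->
  exists e, 0 < e /\ forall a, In a l -> P a e.
Proof.
  intros Hmon l; induction l as [|a l IH]; intros H.
  - exists 1; split; [lra| intros a []].
  - destruct (H a (or_introl eq_refl)) as [e1 [He1 P1]].
    destruct IH as [e2 [He2 P2]]. { intros b Hb; apply H; right; auto. }
    exists (Rmin e1 e2). assert (0 < Rmin e1 e2) by (unfold Rmin; destruct Rle_dec; lra).
    split; auto. intros b [<-|Hb].
    + apply (Hmon _ e1); auto. split; auto. apply Rmin_l.
    + apply (Hmon _ e2); auto. split; auto; apply Rmin_r.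
Qed.

Fixpoint enum (n : nat) : list (sphere n) :=
  match n return list (sphere n) with
  | O => true :: false :: nil
  | S m => map (@inl (sphere m) bool) (enum m) ++ (@inr (sphere m) bool true) :: (@inr (sphere m) bool false) :: nil
  end.

Lemma enum_complete : forall n (x : sphere n), In x (enum n).
Proof.
  induction n; simpl; intros x.
  - destruct x; simpl; auto.
  - destruct x as [a|b]; apply in_or_app; [left; apply in_map; auto | right; destruct b; simpl; auto].
Qed.

Lemma G_const : forall n (G : R -> sphere n -> sphere n),
  (forall t, 0<=t<=1 -> forall y y', Defs.le _ y y' -> Defs.le _ (G t y) (G t y')) ->
  (forall t, 0<=t<=1 -> forall y, exists eps, 0<eps /\ forall s, 0<=s<=1 -> Rabs (s-t) < eps -> Defs.le _ (G s y) (G t y)) ->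
  forall t, 0<=t<=1 -> ((forall y, G t y = y) <-> (forall y, G 0 y = y)).
Proof.
  intros n G Hmono Hloc. apply (conn (fun t => forall y, G t y = y)). intros t Ht.
  destruct (unif _ (fun y e => forall s, 0<=s<=1 -> Rabs (s-t) < e -> Defs.le _ (G s y) (G t y))) with (l := enum n) as [e [He Hu]].
  - intros a e e' He' Ha s Hs Hst. apply Ha; auto. lra.
  - intros a _. apply Hloc; auto.
  - exists e; split; auto. intros s Hs Hst. split; intros HQ.
    + apply rig_ge. apply Hmono; auto. intros y.
      specialize (Hu y (enum_complete n y) s Hs Hst). rewrite (HQ y) in Hu. exact Hu.
    + apply rig_le. apply Hmono; auto. intros y.
      specialize (Hu y (enum_complete n y) s Hs Hst). rewrite (HQ y) in Hu. exact Hu.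
Qed.

Lemma down_closed : forall (X : poset) (O : X * X -> Prop) a b x y, prod_open X O -> O (a,b) ->
  Defs.le X x a -> Defs.le X y b -> O (x,y).
Proof.
  intros X O a b x y H Hab Hx Hy.
  destruct (H a b Hab) as [A [B [HA [HB [Ha [Hb HO]]]]]].
  apply HO; [apply (HA a x) | apply (HB b y)]; auto.
Qed.

Lemma sec_mono : forall n (U : sphere n * sphere n -> Prop) s, prod_open (sphere n) U ->
  (forall K W, compact K -> (forall t, K t -> 0<=t<=1) -> is_open (sphere n) W ->
     sub_open (sphere n) U (fun p => forall t, K t -> W (s p t))) ->
  forall a b x y t, 0<=t<=1 -> U (a,b) -> Defs.le (sphere n) x a -> Defs.le (sphere n) y b ->
  Defs.le (sphere n) (s (x,y) t) (s (a,b) t).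
Proof.
  intros n U s HU Hc a b x y t Ht Hab Hx Hy.
  destruct (Hc (fun c => t <= c <= t) (fun z => Defs.le (sphere n) z (s (a,b) t))) as [O [HO HUO]].
  - apply compact_P3.
  - intros c Hc'; lra.
  - intros z w Hwz Hz. eapply sph_trans; eauto.
  - assert (Op : O (a,b)). { apply HUO; auto. intros c Hc'. replace c with t by lra. apply sph_refl. }
    assert (Oq : O (x,y)) by (eapply down_closed; eauto).
    assert (Uq : U (x,y)) by (eapply down_closed; eauto).
    apply (proj2 (HUO (x,y) Uq) Oq t). lra.
Qed.

Fixpoint basept (n:nat) : sphere n :=
  match n return sphere n with O => true | S m => @inl (sphere m) bool (basept m) end.

Definition tp m (b : bool) : sphere (S m) := @inr (sphere m) bool b.
Definition cp m : sphere (S m) := @inl (sphere m) bool (basept m).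

Lemma no_two : forall m (U : sphere (S m) * sphere (S m) -> Prop), prod_open (sphere (S m)) U -> has_section (sphere (S m)) U ->
  forall b1 b2 b1' b2', U (tp m b1, tp m b2) -> U (tp m b1', tp m b2') ->
  b1 <> b1' \/ b2 <> b2' -> False.
Proof.
  intros m U HU [s [Hp Hc]] b1 b2 b1' b2' H1 H2 Hd.
  assert (key : forall c c', c <> c' -> forall y : sphere (S m), Defs.le (sphere (S m)) y (tp m c) \/ Defs.le (sphere (S m)) y (tp m c')).
  { intros c c' Hcc y. destruct y as [a|b]; [left; exact I|]. unfold tp; cbn.
    destruct b, c, c'; auto; congruence. }
  destruct Hd as [Hd|Hd].
  - assert (Hall : forall y, U (y, cp m)).
    { intro y. destruct (key _ _ Hd y) as [K|K].
      - eapply down_closed; [exact HU| exact H1| exact K| exact I].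
      - eapply down_closed; [exact HU| exact H2| exact K| exact I]. }
    assert (HG := G_const (S m) (fun t y => s (y, cp m) t)).
    destruct HG with (t := 1) as [HG1 HG0].
    + intros t Ht y y' Hyy'. apply (sec_mono (S m) U s HU Hc y' (cp m) y (cp m) t Ht (Hall y') Hyy' (sph_refl _ _)).
    + intros t Ht y. destruct (Hp (y, cp m) (Hall y)) as [Hpc _].
      apply (Hpc (fun z => Defs.le (sphere (S m)) z (s (y, cp m) t))); auto.
      * intros z w Hwz Hz. eapply sph_trans; eauto.
      * apply sph_refl.
    + lra.
    + assert (Hz : forall y, s (y, cp m) 0 = y).
      { intro y. destruct (Hp _ (Hall y)) as [_ [E _]]. exact E. }
      specialize (HG0 Hz (tp m true)).
      destruct (Hp _ (Hall (tp m true))) as [_ [_ E1]]. cbv beta in HG0.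
      rewrite E1 in HG0. simpl in HG0. unfold cp, tp in HG0. discriminate.
  - assert (Hall : forall y, U (cp m, y)).
    { intro y. destruct (key _ _ Hd y) as [K|K].
      - eapply down_closed; [exact HU| exact H1| exact I| exact K].
      - eapply down_closed; [exact HU| exact H2| exact I| exact K]. }
    assert (HG := G_const (S m) (fun t y => s (cp m, y) t)).
    destruct HG with (t := 1) as [HG1 HG0].
    + intros t Ht y y' Hyy'. apply (sec_mono (S m) U s HU Hc (cp m) y' (cp m) y t Ht (Hall y') (sph_refl _ _) Hyy').
    + intros t Ht y. destruct (Hp (cp m, y) (Hall y)) as [Hpc _].
      apply (Hpc (fun z => Defs.le (sphere (S m)) z (s (cp m, y) t))); auto.
      * intros z w Hwz Hz. eapply sph_trans; eauto.
      * apply sph_refl.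
    + lra.
    + assert (Hz : forall y, s (cp m, y) 1 = y).
      { intro y. destruct (Hp _ (Hall y)) as [_ [_ E]]. exact E. }
      specialize (HG1 Hz (tp m true)).
      destruct (Hp _ (Hall (tp m true))) as [_ [E0 _]]. cbv beta in HG1.
      rewrite E0 in HG1. simpl in HG1. unfold cp, tp in HG1. discriminate.
Qed.

Lemma mk_section : forall n (U : sphere n * sphere n -> Prop) s, prod_open (sphere n) U ->
  (forall p, U p -> path_continuous (sphere n) (s p) /\ s p 0 = fst p /\ s p 1 = snd p) ->
  (forall a b x y t, U (a,b) -> Defs.le (sphere n) x a -> Defs.le (sphere n) y b -> Defs.le (sphere n) (s (x,y) t) (s (a,b) t)) ->
  has_section (sphere n) U.
Proof.
  intros n U s HU Hp Hm. exists s. split; auto. intros K W _ _ HW.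
  exists (fun p => U p /\ forall t, K t -> W (s p t)). split.
  - intros a b [HUab HK]. exists (fun x => Defs.le (sphere n) x a), (fun y => Defs.le (sphere n) y b).
    split; [|split; [|split; [|split]]].
    + intros x z Hzx Hx. eapply sph_trans; eauto.
    + intros x z Hzx Hx. eapply sph_trans; eauto.
    + apply sph_refl.
    + apply sph_refl.
    + intros x y Hx Hy. split. eapply down_closed; eauto.
      intros t Kt. apply (HW _ _ (Hm a b x y t HUab Hx Hy)). apply HK; auto.
  - intros p Up. tauto.
Qed.

Definition sect m (b1 b2 : bool) (p : sphere (S m) * sphere (S m)) (t : R) : sphere (S m) :=
  if Rlt_dec t (1/4) then fst p else if Rle_dec t (1/4) then tp m b1
  else if Rlt_dec t (1/2) then cp m else if Rle_dec t (1/2) then tp m b2 else snd p.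

Ltac norm := repeat match goal with
  | H : ~ _ <= _ |- _ => apply Rnot_le_lt in H
  | H : ~ _ < _ |- _ => apply Rnot_lt_le in H end.

Lemma sect_cont : forall m b1 b2 x y, Defs.le (sphere (S m)) x (tp m b1) -> Defs.le (sphere (S m)) y (tp m b2) ->
  path_continuous (sphere (S m)) (sect m b1 b2 (x,y)).
Proof.
  intros m b1 b2 x y Hx Hy W HW t Ht HWt.
  assert (Hc1 : Defs.le (sphere (S m)) (cp m) (tp m b1)) by exact I.
  assert (Hc2 : Defs.le (sphere (S m)) (cp m) (tp m b2)) by exact I.
  unfold sect in HWt; simpl in HWt.
  destruct (Rlt_dec t (1/4)) as [h1|h1]; [|destruct (Rle_dec t (1/4)) as [h2|h2];
    [|destruct (Rlt_dec t (1/2)) as [h3|h3]; [|destruct (Rle_dec t (1/2)) as [h4|h4]]]]; norm.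
  - exists (1/4 - t).
    split; [lra|]. intros s Hs Hst. apply Rabs_def2 in Hst. unfold sect; simpl.
    destruct (Rlt_dec s (1/4)); norm; [exact HWt|lra].
  - exists (1/4). split; [lra|]. intros s Hs Hst. apply Rabs_def2 in Hst. unfold sect; simpl.
    destruct (Rlt_dec s (1/4)); norm; [apply (HW _ _ Hx HWt)|].
    destruct (Rle_dec s (1/4)); norm; [exact HWt|].
    destruct (Rlt_dec s (1/2)); norm; [apply (HW _ _ Hc1 HWt)|lra].
  - exists (Rmin (t - 1/4) (1/2 - t)).
    pose proof (Rmin_l (t - 1/4) (1/2 - t)). pose proof (Rmin_r (t - 1/4) (1/2 - t)).
    split; [unfold Rmin; destruct Rle_dec; lra|]. intros s Hs Hst. apply Rabs_def2 in Hst. unfold sect; simpl.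
    destruct (Rlt_dec s (1/4)); norm; [lra|].
    destruct (Rle_dec s (1/4)); norm; [lra|].
    destruct (Rlt_dec s (1/2)); norm; [exact HWt|lra].
  - exists (1/4). split; [lra|]. intros s Hs Hst. apply Rabs_def2 in Hst. unfold sect; simpl.
    destruct (Rlt_dec s (1/4)); norm; [lra|].
    destruct (Rle_dec s (1/4)); norm; [lra|].
    destruct (Rlt_dec s (1/2)); norm; [apply (HW _ _ Hc2 HWt)|].
    destruct (Rle_dec s (1/2)); norm; [exact HWt|apply (HW _ _ Hy HWt)].
  - exists (t - 1/2). split; [lra|]. intros s Hs Hst. apply Rabs_def2 in Hst. unfold sect; simpl.
    destruct (Rlt_dec s (1/4)); norm; [lra|].
    destruct (Rle_dec s (1/4)); norm; [lra|].
    destruct (Rlt_dec s (1/2)); norm; [lra|].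
    destruct (Rle_dec s (1/2)); norm; [lra|exact HWt].
Qed.

Definition Ui m (i : nat) (p : sphere (S m) * sphere (S m)) : Prop :=
  Defs.le (sphere (S m)) (fst p) (tp m (Nat.ltb i 2)) /\ Defs.le (sphere (S m)) (snd p) (tp m (Nat.even i)).

Lemma Ui_open : forall m i, prod_open (sphere (S m)) (Ui m i).
Proof.
  intros m i a b [Ha Hb].
  exists (fun x => Defs.le (sphere (S m)) x (tp m (Nat.ltb i 2))), (fun y => Defs.le (sphere (S m)) y (tp m (Nat.even i))).
  split; [|split; [|split; [|split]]]; auto.
  - intros x z Hzx Hx. eapply sph_trans; eauto.
  - intros x z Hzx Hx. eapply sph_trans; eauto.
  - intros x y Hx Hy. split; auto.
Qed.

Lemma Ui_sec : forall m i, has_section (sphere (S m)) (Ui m i).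
Proof.
  intros m i. apply (mk_section (S m) (Ui m i) (sect m (Nat.ltb i 2) (Nat.even i))).
  - apply Ui_open.
  - intros [x y] [Hx Hy]. split; [apply sect_cont; auto|]. split.
    + unfold sect. destruct (Rlt_dec 0 (1/4)); [reflexivity|lra].
    + unfold sect. destruct (Rlt_dec 1 (1/4)); [lra|]. destruct (Rle_dec 1 (1/4)); [lra|].
      destruct (Rlt_dec 1 (1/2)); [lra|]. destruct (Rle_dec 1 (1/2)); [lra|reflexivity].
  - intros a b x y t _ Hx Hy. unfold sect.
    destruct (Rlt_dec t (1/4)); [exact Hx|]. destruct (Rle_dec t (1/4)); [apply (sph_refl (S m))|].
    destruct (Rlt_dec t (1/2)); [apply (sph_refl (S m))|]. destruct (Rle_dec t (1/2)); [apply (sph_refl (S m))|exact Hy].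
Qed.

Lemma top_of : forall m (x : sphere (S m)), exists b, Defs.le (sphere (S m)) x (tp m b).
Proof. intros m [a|b]; [exists true; exact I| exists b; reflexivity]. Qed.

Lemma Ui_cover : forall m p, exists i, (i < 4)%nat /\ Ui m i p.
Proof.
  intros m [x y]. destruct (top_of m x) as [b1 Hx]. destruct (top_of m y) as [b2 Hy].
  destruct b1, b2; [exists 0%nat|exists 1%nat|exists 2%nat|exists 3%nat]; split; try lia; split; assumption.
Qed.

Theorem corollary7 : forall n : nat, (1 <= n)%nat -> TC_eq (sphere n) 4.
Proof.
  intros n Hn. destruct n as [|m]; [lia|]. split.
  - exists (Ui m). split; [intros i _; split; [apply Ui_open|apply Ui_sec]|apply Ui_cover].
  - intros k [U [HU Hcov]]. destruct (Nat.le_gt_cases 4 k) as [h|h]; [exact h|]. exfalso.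
    assert (Hno : forall i j b1 b2 b1' b2', (i < k)%nat -> U i (tp m b1, tp m b2) -> U j (tp m b1', tp m b2') ->
       i = j -> (b1 <> b1' \/ b2 <> b2') -> False).
    { intros i j b1 b2 b1' b2' Hi H1 H2 -> Hd. destruct (HU j Hi) as [Ho Hs].
      exact (no_two m (U j) Ho Hs b1 b2 b1' b2' H1 H2 Hd). }
    destruct (Hcov (tp m true, tp m true)) as [i1 [Hi1 U1]].
    destruct (Hcov (tp m true, tp m false)) as [i2 [Hi2 U2]].
    destruct (Hcov (tp m false, tp m true)) as [i3 [Hi3 U3]].
    destruct (Hcov (tp m false, tp m false)) as [i4 [Hi4 U4]].
        assert (i1 = i2 \/ i1 = i3 \/ i1 = i4 \/ i2 = i3 \/ i2 = i4 \/ i3 = i4)%nat as Hc by (clear - h Hi1 Hi2 Hi3 Hi4; lia).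
    destruct Hc as [E|[E|[E|[E|[E|E]]]]].
    + apply (Hno _ _ _ _ _ _ Hi1 U1 U2 E); right; discriminate.
    + apply (Hno _ _ _ _ _ _ Hi1 U1 U3 E); left; discriminate.
    + apply (Hno _ _ _ _ _ _ Hi1 U1 U4 E); left; discriminate.
    + apply (Hno _ _ _ _ _ _ Hi2 U2 U3 E); left; discriminate.
    + apply (Hno _ _ _ _ _ _ Hi2 U2 U4 E); left; discriminate.
    + apply (Hno _ _ _ _ _ _ Hi3 U3 U4 E); right; discriminate.
Qed.
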